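(* For all nonnegative integers $A$, $k$ and $t$, $$k^t \left\{ {A \atop k} \right\} = \sum_{\substack{u,v,w \in \mathbb{N}_0 \\ u+v+w = t}} \binom{t}{u} (-1)^{v} \left\{ {v+w \atop v} \right\} \left\{ {A+u \atop k-v} \right\}.$$
   Context: $\mathbb{N}_0$ denotes the nonnegative integers. $\left\{ {n \atop m} \right\}$ is the Stirling number of the second kind (the number of partitions of an $n$-element set into $m$ nonempty blocks), with $\left\{ {0 \atop 0} \right\} = 1$, $\left\{ {n \atop 0} \right\} = 0$ for $n > 0$, and $\left\{ {n \atop m} \right\} = 0$ whenever $m < 0$ or $m > n$. The convention $0^0 = 1$ is used. *)

(* Defs.v *)
From mathcomp Require Import all_boot all_order all_algebra.
Set Implicit Arguments. Unset Strict Implicit. Unset Printing Implicit Defensive.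

Fixpoint stirling2 (n m : nat) : nat :=
  match n, m with
  | 0, 0 => 1
  | 0, _.+1 => 0
  | _.+1, 0 => 0
  | n'.+1, m'.+1 => m'.+1 * stirling2 n' m'.+1 + stirling2 n' m'
  end.

Definition stirling2z (n : nat) (m : int) : nat :=
  match m with
  | Posz m' => stirling2 n m'
  | Negz _ => 0
  end.

(* Main.v *)
Require Import Defs.
From mathcomp Require Import all_boot all_order all_algebra.
From mathcomp Require Import zify ring.
Import GRing.Theory Num.Theory.
Local Open Scope ring_scope.

Definition sz (B : nat) (m : int) : int := (stirling2z B m)%:Z.

Lemma stir0 n m : (n < m)%N -> stirling2 n m = 0%N.
Proof.
elim: n m => [|n IH] [|m] //= H.
by rewrite !IH ?muln0 //; lia.
Qed.

Lemma sz_neg B m : m < 0 -> sz B m = 0.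
Proof. by case: m. Qed.

Lemma sz_rec B (m : int) : m * sz B m = sz B.+1 m - sz B (m - 1).
Proof.
case: m => [[|n]|n].
- by rewrite mul0r /sz /=.
- have -> : (Posz n.+1 - 1) = Posz n by rewrite -addn1 PoszD addrK.
  rewrite /sz /= PoszD PoszM; ring.
- rewrite (@sz_neg B (Negz n - 1)) ?subr0; last by lia.
  by rewrite /sz /= mulr0.
Qed.

Definition R (m B : nat) (k : int) : int :=
  \sum_(v < m.+1) (-1) ^+ v * (stirling2 m v)%:Z * sz B (k - v%:Z).

Lemma R_widen m B k N : (m < N)%N ->
  R m B k = \sum_(v < N) (-1) ^+ v * (stirling2 m v)%:Z * sz B (k - v%:Z).
Proof.
move=> H; rewrite /R (big_ord_widen N (fun v => (-1) ^+ v * (stirling2 m v)%:Z * sz B (k - v%:Z))) //.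
rewrite big_mkcond /=; apply: eq_bigr => i _.
by case: ifP => // Hi; rewrite stir0 ?mulr0 ?mul0r //; lia.
Qed.

Lemma R_rec m B k : k * R m B k = R m B.+1 k + R m.+1 B k.
Proof.
have E1 : R m.+1 B k = \sum_(i < m.+1) (-1) ^+ i.+1 * (i.+1 * stirling2 m i.+1)%N%:Z * sz B (k - i.+1%:Z)
   - \sum_(i < m.+1) (-1) ^+ i * (stirling2 m i)%:Z * sz B (k - i%:Z - 1).
  rewrite /R big_ord_recl /= mulr0 mul0r add0r -sumrB; apply: eq_bigr => i _.
  rewrite /bump /= PoszD exprS.
  have -> : (k - (1 + i)%N%:Z) = k - i%:Z - 1 by rewrite PoszD; ring.
  by rewrite !add0n PoszD; ring.
have E2 : \sum_(i < m.+1) (-1) ^+ i.+1 * (i.+1 * stirling2 m i.+1)%N%:Z * sz B (k - i.+1%:Z)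
   = \sum_(v < m.+1) (-1) ^+ v * (stirling2 m v)%:Z * (v%:Z * sz B (k - v%:Z)).
  rewrite [in LHS]big_ord_recr /= stir0 // muln0 mulr0 mul0r addr0.
  rewrite [in RHS]big_ord_recl /= mul0r mulr0 add0r.
  apply: eq_bigr => i _; rewrite /bump /= PoszM add1n; ring.
rewrite E1 E2 /R mulr_sumr -sumrB -big_split /=; apply: eq_bigr => i _.
have := sz_rec B (k - i%:Z); move=> H.
have -> : k * ((-1) ^+ i * (stirling2 m i)%:Z * sz B (k - i%:Z)) =
  (-1) ^+ i * (stirling2 m i)%:Z * ((k - i%:Z) * sz B (k - i%:Z) + i%:Z * sz B (k - i%:Z)) by ring.
rewrite H; ring.
Qed.

Definition T (t A : nat) (k : int) : int :=
  \sum_(u < t.+1) ('C(t, u))%:Z * R (t - u) (A + u) k.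

Lemma T_rec t A k : k * T t A k = T t.+1 A k.
Proof.
rewrite /T mulr_sumr.
under eq_bigr do rewrite mulrCA R_rec mulrDr.
rewrite big_split /= [in RHS]big_ord_recl /=.
under [in RHS]eq_bigr do rewrite /bump /= binS PoszD mulrDl.
rewrite big_split /= addrA [RHS]addrC; congr (_ + _).
  by apply: eq_bigr => i _; rewrite add1n subSS addnS.
rewrite [in RHS]big_ord_recr /= (@bin_small t t.+1) // mul0r addr0.
rewrite big_ord_recl /= !bin0 !subn0 !addn0; congr (_ + _).
apply: eq_bigr => i _; rewrite /bump /= add1n subSS subnSK //.
Qed.

Lemma T0 A k : T 0 A k = sz A k.
Proof. by rewrite /T big_ord1 /R big_ord1 /= addn0 subr0 !mul1r. Qed.

Lemma inner t u v (f : nat -> int) : (u < t.+1)%N -> (v < t.+1)%N ->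
  \sum_(w < t.+1 | (u + v + w)%N == t) f (v + w)%N =
  if (u + v <= t)%N then f (t - u)%N else 0.
Proof.
move=> Hu Hv; case: leqP => H.
  have Hw : (t - u - v < t.+1)%N by lia.
  rewrite (big_pred1 (Ordinal Hw)).
    by congr f; rewrite /=; lia.
  move=> w /=; rewrite -val_eqE /=; apply/idP/idP => /eqP H'; apply/eqP; lia.
by rewrite big_pred0 // => w; apply/negbTE/eqP; lia.
Qed.

Lemma main_T A k t : ((k ^ t * stirling2 A k)%N)%:Z = T t A k%:Z.
Proof.
elim: t => [|t IH]; first by rewrite T0 /sz expn0 mul1n.
by rewrite -T_rec -IH expnS -mulnA PoszM.
Qed.

Theorem lemma1 (A k t : nat) :
  ((k ^ t * stirling2 A k)%N)%:Z =
  \sum_(u < t.+1) \sum_(v < t.+1) \sum_(w < t.+1 | (u + v + w)%N == t)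
    (('C(t, u))%:Z * (-1) ^+ v * (stirling2 (v + w) v)%:Z
       * (stirling2z (A + u) (k%:Z - v%:Z))%:Z).
Proof.
rewrite main_T /T; apply: eq_bigr => u _.
rewrite (@R_widen _ _ _ t.+1); last by have := ltn_ord u; lia.
rewrite mulr_sumr; apply: eq_bigr => v _.
rewrite (@inner t u v (fun n => ('C(t, u))%:Z * (-1) ^+ v * (stirling2 n v)%:Z
       * (stirling2z (A + u) (k%:Z - v%:Z))%:Z)) //.
case: leqP => H; first by rewrite /sz; ring.
rewrite stir0; last by have := ltn_ord u; lia.
by rewrite mulr0 mul0r mulr0.
Qed.
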